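(* In the setting $|H|=1$ of the context (with Assumption 1), the convex relaxation (R1) is exact (its optimal value equals $c^\star$) if the following convex set of $(\boldsymbol{\mu},{\bf x},w_1)\in\mathbb{R}^m\times\mathbb{R}^n\times\mathbb{R}$ is empty: $d_1^*+\sum_{i\in M}\xi_i\mu_i=0$; $c_1+\sum_{i\in M}a_{i1}\mu_i=0$; $(D_{jj}-d_1^* )x_j+c_j+\sum_{i\in M}a_{ij}\mu_i=0$ for $j\in N\setminus\{1\}$; $\xi_iw_1+2\sum_{j\in N}a_{ij}x_j\le b_i$ for $i\in M$; $\sum_{j\in N}x_j^2\le w_1$; $\mu_i\ge 0$ for $i\in M$.
   Context: Let $N=\{1,\dots,n\}$, $M=\{1,\dots,m\}$. Data: reals $D_{jj}$ ($j\in N$), $c_j$, $a_{ij}$, $b_i$, $\xi_i$ ($i\in M$, $j\in N$). The diagonal QCQP (P) is $c^\star=\inf\{\sum_{j}D_{jj}x_j^2+2\sum_jc_jx_j : \xi_i\sum_jx_j^2+2\sum_ja_{ij}x_j\le b_i,\ i\in M\}$, i.e. all constraint Hessians are ${\bf A}^i=\xi_i{\bf I}$. Its Shor relaxation is $v^\star=\inf\{{\bf D}\bullet{\bf X}+2{\bf c}^\top{\bf x} : \xi_i\,\mathrm{trace}({\bf X})+2{\bf a}_i^\top{\bf x}\le b_i\ (i\in M),\ {\bf X}-{\bf x}{\bf x}^\top\succeq{\bf O}\}$ with ${\bf D}=\mathrm{diag}(D_{jj})$. Assumption 1: (P) is feasible; some $\bar{\bf y}\ge0$ has $\sum_i\bar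 y_i\xi_i>0$; the Shor relaxation has a feasible point in the interior of its feasible region. It is assumed that $d_1^*=\min_{j\in N}D_{jj}$ is attained uniquely at $j=1$. The convex relaxation (R1) is: $\min\ d_1^*w_1+\sum_{j\in N}(D_{jj}-d_1^* )x_j^2+2\sum_{j\in N}c_jx_j$ s.t. $\xi_iw_1+2\sum_{j\in N}a_{ij}x_j\le b_i$ ($i\in M$), $\sum_{j\in N}x_j^2\le w_1$; its optimal value equals $v^\star$. *)

(* Defs.v *)
From HB Require Import structures.
From mathcomp Require Import all_boot all_order all_algebra.
From mathcomp Require Import boolp classical_sets reals constructive_ereal ereal.
Set Implicit Arguments. Unset Strict Implicit. Unset Printing Implicit Defensive.
Import Order.TTheory GRing.Theory Num.Theory.
Local Open Scope ring_scope.
Local Open Scope classical_set_scope.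

(* Index j = 1 of the paper is ord0 : 'I_n.+1 here (N = 'I_n.+1, M = 'I_m). *)
Section Diag.
Variables (R : realType) (n m : nat).
Variables (D c : 'I_n.+1 -> R) (a : 'I_m -> 'I_n.+1 -> R) (b xi : 'I_m -> R).

Definition posdef (A : 'M[R]_n.+1) :=
  forall v : 'cV[R]_n.+1, v != 0 -> 0 < (v^T *m A *m v) 0 0.

Definition P_obj (x : 'I_n.+1 -> R) :=
  \sum_j D j * x j ^+ 2 + 2 * \sum_j c j * x j.
Definition P_feas (x : 'I_n.+1 -> R) :=
  forall i, xi i * (\sum_j x j ^+ 2) + 2 * \sum_j a i j * x j <= b i.
Definition cstar : \bar R :=
  ereal_inf [set (P_obj x)%:E | x in P_feas].

Definition Shor_strictly_feasible :=
  exists (X : 'M[R]_n.+1) (x : 'cV[R]_n.+1),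
    X^T = X /\
    (forall i, xi i * \tr X + 2 * \sum_j a i j * x j 0 < b i) /\
    posdef (X - x *m x^T).

Definition assumption1 :=
  (exists x, P_feas x) /\
  (exists y : 'I_m -> R, (forall i, 0 <= y i) /\ 0 < \sum_i y i * xi i) /\
  Shor_strictly_feasible.

Definition d1 := D ord0.

Definition R1_obj (x : 'I_n.+1 -> R) (w1 : R) :=
  d1 * w1 + \sum_j (D j - d1) * x j ^+ 2 + 2 * \sum_j c j * x j.
Definition R1_feas (x : 'I_n.+1 -> R) (w1 : R) :=
  (forall i, xi i * w1 + 2 * \sum_j a i j * x j <= b i) /\
  \sum_j x j ^+ 2 <= w1.
Definition R1_value : \bar R :=
  ereal_inf [set (R1_obj xw.1 xw.2)%:E | xw in [set xw | R1_feas xw.1 xw.2]].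

Definition certificate_set : set ((('I_m -> R) * ('I_n.+1 -> R)) * R) :=
  [set t | let: (mu, x, w1) := t in
     d1 + \sum_i xi i * mu i = 0 /\
     c ord0 + \sum_i a i ord0 * mu i = 0 /\
     (forall j, j != ord0 -> (D j - d1) * x j + c j + \sum_i a i j * mu i = 0) /\
     R1_feas x w1 /\
     (forall i, 0 <= mu i)].
End Diag.

(* Main.v *)
Require Import Defs.
From HB Require Import structures.
From mathcomp Require Import all_boot all_order all_algebra.
From mathcomp Require Import boolp classical_sets reals constructive_ereal ereal.
From mathcomp Require Import topology normedtype matrix_normedtype derive.
From mathcomp Require Import ring lra.

Import Order.TTheory GRing.Theory Num.Theory.
Import numFieldNormedType.Exports.
Local Open Scope ring_scope.
Local Open Scope classical_set_scope.

Section Cont.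
Variables (R : realType) (p : nat).
Local Notation T := 'rV[R]_p.
Definition ctn (f : T -> R) := continuous f.
Lemma ctn_cst r : ctn (fun _ => r). Proof. exact: cst_continuous. Qed.
Lemma ctn_coord i : ctn (fun v : T => v ord0 i). Proof. exact: coord_continuous. Qed.
Lemma ctn_add {f g} : ctn f -> ctn g -> ctn (fun v => f v + g v).
Proof. by move=> hf hg x; exact: (continuousD (hf x) (hg x)). Qed.
Lemma ctn_mul {f g} : ctn f -> ctn g -> ctn (fun v => f v * g v).
Proof. by move=> hf hg x; exact: (continuousM (hf x) (hg x)). Qed.
Lemma ctn_sum (I : finType) (F : I -> T -> R) : (forall i, ctn (F i)) ->
  ctn (fun v => \sum_i F i v).
Proof.
move=> hF; rewrite /ctn.
have : forall s : seq I, ctn (fun v => \sum_(i <- s) F i v).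
  elim=> [|i s IH].
    by under [fun v => _]funext do rewrite big_nil; exact: ctn_cst.
  by under [fun v => _]funext do rewrite big_cons; exact: ctn_add.
by apply.
Qed.
Lemma closed_le_ctn f g : ctn f -> ctn g -> closed [set v | f v <= g v].
Proof.
move=> hf hg.
have -> : [set v | f v <= g v] = (fun v => g v + (-1) * f v) @^-1` [set x | 0 <= x].
  by apply/seteqP; split => v /=; rewrite mulN1r subr_ge0.
apply: preimage_closed; last exact: closed_ge.
move=> x _; exact: (ctn_add hg (ctn_mul (ctn_cst (-1)) hf)).
Qed.
End Cont.
Arguments ctn {R p}. Arguments ctn_cst {R p}. Arguments ctn_coord {R p}. Arguments ctn_add {R p f g}. Arguments ctn_mul {R p f g}. Arguments ctn_sum {R p I F}. Arguments closed_le_ctn {R p f g}.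
Section Farkas.
Variables (R : realFieldType) (I : finType).
Definition dot (u v : I -> R) := \sum_j u j * v j.

Lemma dotBr (u d e : I -> R) (r : R) :
  dot u (fun j => d j - r * e j) = dot u d - r * dot u e.
Proof. by rewrite /dot mulr_sumr -sumrB; apply: eq_bigr => j _; ring. Qed.

Lemma dotBl (u v d : I -> R) (s t : R) :
  dot (fun j => s * u j - t * v j) d = s * dot u d - t * dot v d.
Proof. by rewrite /dot !mulr_sumr -sumrB; apply: eq_bigr => j _; ring. Qed.

Lemma dot_self_le0 (c : I -> R) : dot c c <= 0 -> forall j, c j = 0.
Proof.
move=> H j.
have H0 : \sum_j c j * c j = 0.
  by apply/eqP; rewrite eq_le H /= sumr_ge0 // => i _; rewrite -expr2 sqr_ge0.
have Hp : forall i, predT i -> 0 <= c i * c i by move=> i _; rewrite -expr2 sqr_ge0.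
have /eqP := @psumr_eq0P _ _ predT (fun i => c i * c i) Hp H0 j isT.
by rewrite mulf_eq0 orbb => /eqP.
Qed.

Lemma sum_combo k (mu : 'I_k -> R) (x beta : 'I_k -> R) (al y : R) :
  \sum_i mu i * (al * x i - beta i * y) =
  al * \sum_i mu i * x i - (\sum_i mu i * beta i) * y.
Proof. by rewrite mulr_sumr mulr_suml -sumrB; apply: eq_bigr => i _; ring. Qed.

Lemma widen_lift k (i : 'I_k) : widen_ord (leqnSn k) i = lift ord_max i.
Proof. by apply: val_inj; rewrite /= /bump leqNgt ltn_ord. Qed.

Lemma farkas k : forall (a : 'I_k -> I -> R) (c : I -> R),
  (forall d, (forall i, dot (a i) d <= 0) -> dot c d <= 0) ->
  exists mu : 'I_k -> R, (forall i, 0 <= mu i) /\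
    forall j, c j = \sum_i mu i * a i j.
Proof.
elim: k => [|k IH] a c H.
  exists (fun _ => 0); split => // j.
  rewrite big_ord0; apply: dot_self_le0 => //.
  by apply: H => -[].
pose ak i := a (lift ord_max i).
pose ac := a ord_max.
have split_sum (F : 'I_k.+1 -> R) : \sum_i F i = \sum_i F (lift ord_max i) + F ord_max.
  by rewrite big_ord_recr /=; congr (_ + _); apply: eq_bigr => i _; rewrite widen_lift.
have [[d [Hd Hcd]]|Hno] := pselect (exists d, (forall i, dot (ak i) d <= 0) /\ 0 < dot c d);
  last first.
  have [mu [mu0 Hmu]] : exists mu : 'I_k -> R, (forall i, 0 <= mu i) /\
      forall j, c j = \sum_i mu i * ak i j.
    apply: IH => d Hd; rewrite leNgt; apply/negP => Hcd; apply: Hno; by exists d.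
  exists (fun i => if unlift ord_max i is Some i' then mu i' else 0); split.
    by move=> i; case: (unlift ord_max i).
  move=> j; rewrite split_sum unlift_none mul0r addr0 Hmu.
  by apply: eq_bigr => i _; rewrite liftK.
set al := dot ac d; set ga := dot c d.
have al0 : 0 < al.
  rewrite ltNge; apply/negP => Hal.
  have : dot c d <= 0.
    apply: H => i; case: (unliftP ord_max i) => [i'|] ->; [exact: Hd|exact: Hal].
  by rewrite leNgt Hcd.
pose beta i := dot (ak i) d.
pose a' i j := al * ak i j - beta i * ac j.
pose c' j := al * c j - ga * ac j.
have [mu [mu0 Hmu]] : exists mu : 'I_k -> R, (forall i, 0 <= mu i) /\
    forall j, c' j = \sum_i mu i * a' i j.
  apply: IH => d' Hd'; rewrite leNgt; apply/negP => Hcd'.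
  pose r := dot ac d' / al.
  pose d'' j := d' j - r * d j.
  have alne : al != 0 by rewrite gt_eqF.
  have : dot c d'' <= 0.
    apply: H => i; case: (unliftP ord_max i) => [i'|] ->.
      rewrite /d'' dotBr -/(ak i') -/(beta i').
      have := Hd' i'; rewrite /a' dotBl -/ac.
      have -> : al * dot (ak i') d' - beta i' * dot ac d' = al * (dot (ak i') d' - r * beta i').
        by rewrite /r; field.
      by rewrite pmulr_rle0.
    by rewrite /d'' dotBr -/ac -/al /r divfK // subrr.
  rewrite /d'' dotBr -/ga leNgt.
  have : 0 < dot c' d' by [].
  rewrite /c' dotBl -/ac.
  have -> : al * dot c d' - ga * dot ac d' = al * (dot c d' - r * ga).
    by rewrite /r; field.
  by rewrite pmulr_rgt0 // => ->.
pose S2 := \sum_i mu i * beta i.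
exists (fun i => if unlift ord_max i is Some i' then mu i' else (ga - S2) / al); split.
  move=> i; case: (unlift ord_max i) => [i'|]; first exact: mu0.
  apply: divr_ge0; last exact: ltW.
  rewrite subr_ge0; apply: le_trans (ltW Hcd); rewrite /S2.
  apply: sumr_le0 => i' _; rewrite mulr_ge0_le0 //; exact: Hd.
move=> j; rewrite split_sum unlift_none.
under eq_bigr do rewrite liftK.
have := Hmu j; rewrite /c' /a' sum_combo -/S2 => E.
have alne : al != 0 by rewrite gt_eqF.
apply: (mulfI alne).
rewrite mulrDr mulrA [al * (_ / _)]mulrC divfK //.
move: E; rewrite /ac /ak; set S1 := \sum_i _ => E.
have -> : al * S1 = al * c j - ga * a ord_max j + S2 * a ord_max j by rewrite E; ring.
ring.
Qed.
End Farkas.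
Arguments dot {R I}.

Section Minimizer.
Variables (R : realType) (n m : nat).
Variables (D c : 'I_n.+1 -> R) (a : 'I_m -> 'I_n.+1 -> R) (b xi : 'I_m -> R).
Local Notation T := 'rV[R]_n.+2.
Definition xof (v : T) (j : 'I_n.+1) := v ord0 (lift ord_max j).
Definition wof (v : T) := v ord0 ord_max.
Definition mkv (x : 'I_n.+1 -> R) (w : R) : T :=
  \row_i (if unlift ord_max i is Some j then x j else w).
Lemma xof_mkv x w : xof (mkv x w) = x.
Proof. by apply: funext => j; rewrite /xof /mkv mxE liftK. Qed.
Lemma wof_mkv x w : wof (mkv x w) = w.
Proof. by rewrite /wof /mkv mxE unlift_none. Qed.

Lemma ctn_sq (g : T -> R) : ctn g -> ctn (fun v => g v ^+ 2).
Proof.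
move=> hg; have -> : (fun v => g v ^+ 2) = (fun v => g v * g v).
  by apply: funext => v; rewrite expr2.
exact: ctn_mul.
Qed.

Lemma ctn_lin (al : R) (be : 'I_n.+1 -> R) :
  ctn (fun v : T => al * wof v + 2 * \sum_j be j * xof v j).
Proof.
apply: ctn_add; first exact: ctn_mul (ctn_cst _) (ctn_coord _).
apply: ctn_mul; first exact: ctn_cst.
by apply: ctn_sum => j; apply: ctn_mul (ctn_cst _) (ctn_coord _).
Qed.

Lemma ctn_obj : ctn (fun v : T => R1_obj D c (xof v) (wof v)).
Proof.
rewrite /R1_obj.
apply: ctn_add; last first.
  apply: ctn_mul; first exact: ctn_cst.
  by apply: ctn_sum => j; apply: ctn_mul (ctn_cst _) (ctn_coord _).
apply: ctn_add; first exact: ctn_mul (ctn_cst _) (ctn_coord _).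
apply: ctn_sum => j; apply: ctn_mul (ctn_cst _) _; apply: ctn_sq; exact: ctn_coord.
Qed.

Lemma feas_closed : closed [set v : T | R1_feas a b xi (xof v) (wof v)].
Proof.
have -> : [set v : T | R1_feas a b xi (xof v) (wof v)] =
  (\bigcap_(i in [set: 'I_m])
     [set v | xi i * wof v + 2 * \sum_j a i j * xof v j <= (fun _ => b i) v])
  `&` [set v | \sum_j xof v j ^+ 2 <= wof v].
  apply/seteqP; split => v /=.
    by move=> [H1 H2]; split => // i _; exact: H1.
  by move=> [H1 H2]; split => // i; exact: H1.
apply: closedI.
  apply: closed_bigI => i _; apply: closed_le_ctn; [exact: ctn_lin|exact: ctn_cst].
apply: closed_le_ctn; last exact: ctn_coord.
by apply: ctn_sum => j; apply: ctn_sq; exact: ctn_coord.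
Qed.

Lemma sq_le_sum (x : 'I_n.+1 -> R) j : x j ^+ 2 <= \sum_k x k ^+ 2.
Proof.
rewrite (bigD1 j) //= lerDl; apply: sumr_ge0 => k _; exact: sqr_ge0.
Qed.

Lemma am_gm (s al x : R) : 0 < s -> - (2 * al * x) <= s / 2 * x ^+ 2 + 2 * al ^+ 2 / s.
Proof.
move=> s0; rewrite -subr_ge0.
have -> : s / 2 * x ^+ 2 + 2 * al ^+ 2 / s - - (2 * al * x) = s / 2 * (x + 2 * al / s) ^+ 2.
  by field; rewrite gt_eqF.
by apply: mulr_ge0; [apply: divr_ge0; [exact: ltW|] | exact: sqr_ge0].
Qed.

Lemma feas_bound : (exists y : 'I_m -> R, (forall i, 0 <= y i) /\ 0 < \sum_i y i * xi i) ->
  exists W, forall x w, R1_feas a b xi x w -> w <= W.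
Proof.
move=> [y [y0 s0]]; set s := \sum_i _ in s0.
pose Bb := \sum_i y i * b i.
pose al j := \sum_i y i * a i j.
pose K0 := \sum_j 2 * al j ^+ 2 / s.
exists (2 * (Bb + K0) / s) => x w [H1 H2].
have E1 : \sum_i y i * (xi i * w + 2 * \sum_j a i j * x j) <= Bb.
  by apply: ler_sum => i _; apply: ler_wpM2l.
have E2 : \sum_i y i * (xi i * w + 2 * \sum_j a i j * x j) = s * w + 2 * \sum_j al j * x j.
  rewrite (eq_bigr (fun i => y i * xi i * w + 2 * (y i * \sum_j a i j * x j))); last first.
    by move=> i _; ring.
  rewrite big_split /= -mulr_suml -mulr_sumr; congr (_ + 2 * _).
  rewrite (eq_bigr (fun i => \sum_j y i * (a i j * x j))); last by move=> i _; rewrite mulr_sumr.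
  rewrite exchange_big /=; apply: eq_bigr => j _.
  rewrite /al mulr_suml; apply: eq_bigr => i _; ring.
have E3 : - (2 * \sum_j al j * x j) <= s / 2 * \sum_j x j ^+ 2 + K0.
  rewrite mulr_sumr -sumrN mulr_sumr -big_split /=; apply: ler_sum => j _.
  by rewrite mulrA; exact: am_gm.
have E4 : s / 2 * \sum_j x j ^+ 2 <= s / 2 * w.
  by apply: ler_wpM2l => //; apply: divr_ge0 => //; exact: ltW.
rewrite ler_pdivlMr //.
have E5 : s / 2 * w = (s * w) / 2 by ring.
lra.
Qed.

Lemma R1_min : (exists x, P_feas a b xi x) ->
  (exists y : 'I_m -> R, (forall i, 0 <= y i) /\ 0 < \sum_i y i * xi i) ->
  exists x w, R1_feas a b xi x w /\
    forall x' w', R1_feas a b xi x' w' -> R1_obj D c x w <= R1_obj D c x' w'.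
Proof.
move=> [x0 Hx0] Hy.
have [W HW] := feas_bound Hy.
pose A := [set v : T | R1_feas a b xi (xof v) (wof v)].
have A0 : A !=set0.
  exists (mkv x0 (\sum_j x0 j ^+ 2)); rewrite /A /= xof_mkv wof_mkv; split => //.
have cA : compact A.
  have cB := rV_compact (fun _ : 'I_n.+2 => @segment_compact _ (- (W + 1)) (W + 1)).
  apply: (subclosed_compact feas_closed cB).
  move=> v [H1 H2] i /=.
  have Hw := HW _ _ (conj H1 H2).
  have Hs0 : 0 <= \sum_j xof v j ^+ 2 by apply: sumr_ge0 => j _; exact: sqr_ge0.
  rewrite in_itv /=; case: (unliftP ord_max i) => [j|] ->.
    have := sq_le_sum (xof v) j; rewrite /xof => Hj.
    apply/andP; split; nra.
  rewrite -/(wof v); apply/andP; split; lra.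
have cf : {within A, continuous (fun v => R1_obj D c (xof v) (wof v))}.
  by apply: continuous_subspaceT; exact: ctn_obj.
have [v /set_mem Av Hmin] := compact_EVT_min A0 cA cf.
exists (xof v), (wof v); split => // x' w' H'.
have := Hmin (mkv x' w'); rewrite xof_mkv wof_mkv; apply.
by apply/mem_set; rewrite /A /= xof_mkv wof_mkv.
Qed.

Lemma small_t (de ep E Q : R) : 0 < de -> 0 < ep -> 0 <= E -> 0 <= Q ->
  exists t, [/\ 0 < t, t <= 1, t * E <= de & t * Q < ep].
Proof.
move=> de0 ep0 E0 Q0.
pose den := de * ep + E * ep + Q * de.
have den0 : 0 < den by rewrite /den; apply: ltr_wpDr; [exact: mulr_ge0 (ltW de0)|];
  apply: ltr_wpDr; [exact: mulr_ge0 (ltW ep0)|exact: mulr_gt0].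
exists (de * ep / den); split.
- by apply: divr_gt0 => //; exact: mulr_gt0.
- rewrite ler_pdivrMr // mul1r /den; have := mulr_ge0 E0 (ltW ep0); have := mulr_ge0 Q0 (ltW de0); lra.
- rewrite mulrAC ler_pdivrMr // /den.
  have h1 := mulr_ge0 (mulr_ge0 (ltW de0) Q0) (ltW de0).
  have h2 := mulr_ge0 (mulr_ge0 (ltW de0) (ltW ep0)) (ltW de0).
  nra.
- rewrite mulrAC ltr_pdivrMr // /den.
  have h1 := mulr_gt0 (mulr_gt0 de0 ep0) ep0.
  have h2 := mulr_ge0 (mulr_ge0 E0 (ltW ep0)) (ltW ep0).
  nra.
Qed.

Lemma dot_split (u v : 'I_n.+2 -> R) :
  dot u v = \sum_j u (lift ord_max j) * v (lift ord_max j) + u ord_max * v ord_max.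
Proof.
by rewrite /dot big_ord_recr /=; congr (_ + _); apply: eq_bigr => j _; rewrite widen_lift.
Qed.

Lemma kkt x w : R1_feas a b xi x w ->
  (forall x' w', R1_feas a b xi x' w' -> R1_obj D c x w <= R1_obj D c x' w') ->
  \sum_j x j ^+ 2 < w ->
  exists mu : 'I_m -> R, [/\ forall i, 0 <= mu i,
    d1 D + \sum_i xi i * mu i = 0 &
    forall j, (D j - d1 D) * x j + c j + \sum_i a i j * mu i = 0].
Proof.
move=> [H1 H2] Hmin Hlt.
pose G i (k : 'I_n.+2) := if unlift ord_max k is Some j then 2 * a i j else xi i.
pose g (k : 'I_n.+2) := if unlift ord_max k is Some j then 2 * (D j - d1 D) * x j + 2 * c j
  else d1 D.
have GL i j : G i (lift ord_max j) = 2 * a i j by rewrite /G liftK.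
have GM i : G i ord_max = xi i by rewrite /G unlift_none.
have gL j : g (lift ord_max j) = 2 * (D j - d1 D) * x j + 2 * c j by rewrite /g liftK.
have gM : g ord_max = d1 D by rewrite /g unlift_none.
have [mu [mu0 Hmu]] : exists mu : 'I_m -> R, (forall i, 0 <= mu i) /\
    forall k, - g k = \sum_i mu i * G i k.
  apply: farkas => d Hd; rewrite leNgt; apply/negP => Hpos.
  pose dx j := d (lift ord_max j); pose dw := d ord_max.
  have Hlin i : xi i * dw + 2 * \sum_j a i j * dx j <= 0.
    have := Hd i; rewrite dot_split GM; under eq_bigr do rewrite GL.
    have -> : 2 * \sum_j a i j * dx j = \sum_j 2 * a i j * d (lift ord_max j).
      by rewrite mulr_sumr; apply: eq_bigr => j _; rewrite mulrA.
    by rewrite addrC.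
  set ep := - dot g d.
  have ep0 : 0 < ep.
    rewrite /ep /dot -sumrN; apply: (lt_le_trans Hpos).
    by apply: ler_sum => k _; rewrite mulNr.
  have Eg : dot g d = \sum_j (2 * (D j - d1 D) * x j + 2 * c j) * dx j + d1 D * dw.
    by rewrite dot_split gM; under eq_bigr do rewrite gL.
  pose A0 := \sum_j x j ^+ 2; pose A1 := \sum_j x j * dx j; pose A2 := \sum_j dx j ^+ 2.
  pose Q := \sum_j (D j - d1 D) * dx j ^+ 2.
  have A20 : 0 <= A2 by apply: sumr_ge0 => j _; exact: sqr_ge0.
  have de0 : 0 < w - A0 by rewrite subr_gt0.
  have E0 : 0 <= `|2 * A1 - dw| + A2 by apply: addr_ge0.
  have [t [t0 t1 tE tQ]] := @small_t _ _ _ _ de0 ep0 E0 (normr_ge0 Q).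
  pose x' j := x j + t * dx j; pose w' := w + t * dw.
  have Hf : R1_feas a b xi x' w'.
    split.
      move=> i; have := H1 i; have := Hlin i.
      have -> : xi i * w' + 2 * \sum_j a i j * x' j =
          (xi i * w + 2 * \sum_j a i j * x j) + t * (xi i * dw + 2 * \sum_j a i j * dx j).
        rewrite /w' /x'.
        have -> : \sum_j a i j * (x j + t * dx j) = \sum_j a i j * x j + t * \sum_j a i j * dx j.
          by rewrite mulr_sumr -big_split /=; apply: eq_bigr => j _; ring.
        ring.
      move=> hl hb; have := mulr_ge0_le0 (ltW t0) hl; lra.
    have -> : \sum_j x' j ^+ 2 = A0 + 2 * t * A1 + t ^+ 2 * A2.
      by rewrite /A0 /A1 /A2 !mulr_sumr -!big_split /=; apply: eq_bigr => j _; rewrite /x'; ring.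
    have F1 : t * (2 * A1 - dw) <= t * `|2 * A1 - dw|.
      by apply: ler_wpM2l; [exact: ltW | exact: ler_norm].
    have F2 : t ^+ 2 * A2 <= t * A2.
      by rewrite expr2 -mulrA ler_pM2l // -{2}(mul1r A2); apply: ler_wpM2r.
    rewrite /w'; lra.
  have Hobj : R1_obj D c x' w' = R1_obj D c x w + t * dot g d + t ^+ 2 * Q.
    rewrite Eg /R1_obj /x' /w' /Q.
    have -> : \sum_j (D j - d1 D) * (x j + t * dx j) ^+ 2 =
      \sum_j (D j - d1 D) * x j ^+ 2 + t * \sum_j 2 * (D j - d1 D) * x j * dx j
      + t ^+ 2 * \sum_j (D j - d1 D) * dx j ^+ 2.
      by rewrite !mulr_sumr -!big_split /=; apply: eq_bigr => j _; ring.
    have -> : \sum_j c j * (x j + t * dx j) = \sum_j c j * x j + t * \sum_j c j * dx j.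
      by rewrite !mulr_sumr -!big_split /=; apply: eq_bigr => j _; ring.
    have -> : \sum_j (2 * (D j - d1 D) * x j + 2 * c j) * dx j =
       \sum_j 2 * (D j - d1 D) * x j * dx j + 2 * \sum_j c j * dx j.
      by rewrite !mulr_sumr -!big_split /=; apply: eq_bigr => j _; ring.
    ring.
  have G1 : t ^+ 2 * Q <= t * (t * `|Q|).
    by rewrite expr2 -mulrA ler_pM2l // ler_pM2l // ler_norm.
  have G2 : t * (t * `|Q|) < t * ep by rewrite ltr_pM2l.
  have := Hmin _ _ Hf; rewrite Hobj.
  have : t * dot g d = - (t * ep) by rewrite /ep mulrN opprK.
  lra.
exists mu; split => //.
  have := Hmu ord_max; rewrite gM; under eq_bigr do rewrite GM.
  move=> E; rewrite (eq_bigr (fun i => mu i * xi i)); last by move=> i _; rewrite mulrC.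
  by rewrite -E addrN.
move=> j; have := Hmu (lift ord_max j); rewrite gL; under eq_bigr do rewrite GL.
have -> : \sum_i mu i * (2 * a i j) = 2 * \sum_i a i j * mu i.
  by rewrite mulr_sumr; apply: eq_bigr => i _; ring.
lra.
Qed.
End Minimizer.

Lemma obj_eq (R : realType) (n : nat) (D c x : 'I_n.+1 -> R) :
  R1_obj D c x (\sum_j x j ^+ 2) = P_obj D c x.
Proof.
rewrite /R1_obj /P_obj (mulr_sumr _ _ _ (d1 D)) -big_split /=.
by congr (_ + _); apply: eq_bigr => j _; ring.
Qed.

Theorem proposition3 (R : realType) (n m : nat)
  (D c : 'I_n.+1 -> R) (a : 'I_m -> 'I_n.+1 -> R) (b xi : 'I_m -> R) :
  assumption1 a b xi ->
  (forall j : 'I_n.+1, j != ord0 -> D ord0 < D j) ->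
  certificate_set D c a b xi = set0 ->
  R1_value D c a b xi = cstar D c a b xi.
Proof.
move=> [HP [Hy _]] _ Hset.
have [x [w [Hf Hmin]]] := @R1_min _ _ _ D c a b xi HP Hy.
have [Hlt|Hge] := ltrP (\sum_j x j ^+ 2) w.
  have [mu [mu0 E1 E2]] := @kkt _ _ _ D c a b xi x w Hf Hmin Hlt.
  have : certificate_set D c a b xi (mu, x, w).
    rewrite /certificate_set /=; split => //; split.
      by have := E2 ord0; rewrite /d1 subrr mul0r add0r.
    split; last by split.
    by move=> j _; exact: E2.
  by rewrite Hset.
have Heq : \sum_j x j ^+ 2 = w by case: Hf => _ H2; apply/eqP; rewrite eq_le H2 Hge.
have HPx : P_feas a b xi x by move=> i; rewrite Heq; case: Hf => H1 _; exact: H1.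
have Eobj : P_obj D c x = R1_obj D c x w by rewrite -Heq obj_eq.
have -> : R1_value D c a b xi = (R1_obj D c x w)%:E.
  apply/le_anti/andP; split.
    by apply: ereal_inf_lbound; exists (x, w).
  apply: le_ereal_inf_tmp => _ [[x' w'] /= Hf' <-]; rewrite lee_fin; exact: Hmin.
apply/le_anti/andP; split.
  apply: le_ereal_inf_tmp => _ [x' Hx' <-]; rewrite lee_fin.
  have Hf' : R1_feas a b xi x' (\sum_j x' j ^+ 2) by split.
  have := Hmin _ _ Hf'.
  by rewrite obj_eq.
by rewrite -Eobj; apply: ereal_inf_lbound; exists x.
Qed.
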